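(* Let $F$ be a supertransversal fully-connected ReLU network. For cells $C,D$ of $\mathcal{C}(F)$ define the product $S(C)\cdot S(D)\in\{-1,0,1\}^N$ by $(S(C)\cdot S(D))_{ij}=S(C)_{ij}$ if $S(C)_{ij}\neq 0$ and $(S(C)\cdot S(D))_{ij}=S(D)_{ij}$ otherwise. Then for all cells $C,D$ of $\mathcal{C}(F)$ there exists a cell $E$ of $\mathcal{C}(F)$ with $S(C)\cdot S(D)=S(E)$, and moreover $C\le E$. Thus the set of sign sequences of cells of $\mathcal{C}(F)$ is a semigroup under this product.
   Context: A ReLU network of architecture $(n_0,\dots,n_m,1)$: affine maps $A_i:\mathbb{R}^{n_{i-1}}\to\mathbb{R}^{n_i}$, $1\le i\le m+1$, $n_{m+1}=1$; $F_i=\mathrm{ReLU}\circ A_i$ ($i\le m$), $G=A_{m+1}$, $F=G\circ F_m\circ\cdots\circ F_1$, $F_{(k)}=F_k\circ\cdots\circ F_1$ ($F_{(0)}=\mathrm{id}$), $F^{(k)}=G\circ F_m\circ\cdots\circ F_k:\mathbb{R}^{n_{k-1}}\to\mathbb{R}$ ($F^{(m+1)}=G$). Node maps $F_{ij}=\pi_j\circ A_i\circ F_{(i-1)}$, $1\le i\le m+1$, $1\le j\le n_i$; $N=n_1+\dots+n_m+1$. Polyhedra are finite intersections of closed half-spaces; $C^\circ$ is the relative interior; $C\le E$ means $C$ is a face of $E$ or equal to $E$. $R^{(i)}$ is the polyhedral complex on $\mathbb{R}^{n_{i-1}}$ induced by the hyperplanes $\{\pi_jA_i=0\}$, $1\le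 j\le n_i$ (cells: nonempty intersections of one choice among $\{\pi_jA_i\ge0\},\{\pi_jA_i\le0\},\{\pi_jA_i=0\}$ for each $j$). Canonical polyhedral complex: $\mathcal{C}(F_{(1)})=R^{(1)}$, $\mathcal{C}(F_{(k)})=\{C\cap F_{(k-1)}^{-1}(R)\neq\emptyset: C\in\mathcal{C}(F_{(k-1)}),R\in R^{(k)}\}$, $2\le k\le m+1$; $\mathcal{C}(F)$ is the last one. The same construction for $F^{(k)}$ gives $\mathcal{C}(F^{(k)})$ on $\mathbb{R}^{n_{k-1}}$, with $\mathcal{C}(F^{(m+1)})=R^{(m+1)}$. The sign sequence $S(C)=s(C)\in\{-1,0,1\}^N$ of a cell has entries $S(C)_{ij}=\mathrm{sgn}(F_{ij}(x))$ for $x\in C^\circ$. A map affine on cells of a polyhedral complex $X$ is transverse on cells of $X$ to a submanifold $Z$ if its restriction to $C^\circ$ is transverse to $Z$ for each cell $C$. Supertransversal: for every $1\le i\le m$, $F_i$ is transverse on cells of $R^{(i)}$ to the interior of every cell of $\mathcal{C}(F^{(i+1)})$. *)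

(* Defs.v *)
From HB Require Import structures.
From mathcomp Require Import all_boot all_order all_algebra.
From mathcomp Require Import reals.
Set Implicit Arguments. Unset Strict Implicit. Unset Printing Implicit Defensive.
Import Order.TTheory GRing.Theory Num.Theory.
Local Open Scope ring_scope.

Definition vec (R : realType) (k : nat) := 'I_k -> R.

Section Geometry.
Variable R : realType.

Definition dotv (k : nat) (a x : vec R k) : R := \sum_(l < k) a l * x l.

(* linear span of the differences x - y, x,y in S (direction of aff(S)) *)
Definition dir (k : nat) (S : vec R k -> Prop) (v : vec R k) : Prop :=
  exists (p : nat) (c : 'I_p -> R) (u w : 'I_p -> vec R k),
    (forall i, S (u i) /\ S (w i)) /\
    forall j, v j = \sum_(i < p) c i * (u i j - w i j).

Definition relint (k : nat) (S : vec R k -> Prop) (x : vec R k) : Prop :=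
  S x /\ exists eps : R, 0 < eps /\
    forall v, dir S v -> (forall j, `|v j| < eps) -> S (fun j => x j + v j).

(* C <= E : C is a face of the polyhedron E or equal to E
   (a = 0, b = 0 gives E itself) *)
Definition face_le (k : nat) (C E : vec R k -> Prop) : Prop :=
  exists (a : vec R k) (b : R),
    (forall x, E x -> dotv a x <= b) /\
    forall x, C x <-> (E x /\ dotv a x = b).

(* f restricted to C° (on which f agrees with the affine map x |-> L x + c)
   is transverse to the submanifold Z (an open subset of an affine subspace):
   at every x in C° with f x in Z, L (T_x C°) + T_{f x} Z is everything. *)
Definition transverse_on (a b : nat) (f : vec R a -> vec R b)
    (C : vec R a -> Prop) (Z : vec R b -> Prop) : Prop :=
  forall (L : 'I_b -> 'I_a -> R) (c : vec R b),
    (forall x, relint C x -> forall j, f x j = \sum_(l < a) L j l * x l + c j) ->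
    forall x, relint C x -> Z (f x) ->
    forall w : vec R b, exists u v,
      dir (relint C) u /\ dir Z v /\
      forall j, w j = \sum_(l < a) L j l * u l + v j.

End Geometry.

Inductive choice3 := ChGe | ChLe | ChEq.

Section Network.
Variable R : realType.
(* Architecture (n 0, ..., n m, n m.+1) with n m.+1 = 1 (imposed in the theorem).
   Paper's A_{i+1} : R^{n i} -> R^{n (i+1)} is x |-> W i x + bias i. *)
Variable m : nat.
Variable n : nat -> nat.
Variable W : forall i : nat, 'I_(n i.+1) -> 'I_(n i) -> R.
Variable bias : forall i : nat, 'I_(n i.+1) -> R.

Definition pre (i : nat) (x : vec R (n i)) : vec R (n i.+1) :=
  fun j => \sum_(l < n i) @W i j l * x l + @bias i j.

(* layer i = F_{i+1} = ReLU o A_{i+1} for i < m, and G = A_{m+1} for i = m *)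
Definition layer (i : nat) (x : vec R (n i)) : vec R (n i.+1) :=
  if (i < m)%N then (fun j => Num.max (pre x j) 0) else pre x.

Fixpoint Fto (k : nat) : vec R (n 0%N) -> vec R (n k) :=
  match k return vec R (n 0%N) -> vec R (n k) with
  | 0 => fun x => x
  | k'.+1 => fun x => @layer k' (@Fto k' x)
  end.

Fixpoint Ffrom (s t : nat) : vec R (n s) -> vec R (n (t + s)%N) :=
  match t return vec R (n s) -> vec R (n (t + s)%N) with
  | 0 => fun x => x
  | t'.+1 => fun x => @layer (t' + s)%N (@Ffrom s t' x)
  end.

(* cells of R^{(i+1)} on R^{n i}, induced by the hyperplanes {pi_j A_{i+1} = 0} *)
Definition regcell (i : nat) (tau : 'I_(n i.+1) -> choice3) (x : vec R (n i)) : Prop :=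
  forall j, match tau j with
            | ChGe => 0 <= pre x j
            | ChLe => pre x j <= 0
            | ChEq => pre x j == 0
            end.

Definition isRcell (i : nat) (C : vec R (n i) -> Prop) : Prop :=
  (exists tau, forall x, C x <-> regcell tau x) /\ exists x, C x.

(* canonF k C : C is a cell of C(F_(k)) (k >= 1); with the convention that
   C(F_(0)) = {R^{n 0}}, so that canonF 1 = R^{(1)}.  C(F) = canonF m.+1. *)
Fixpoint canonF (k : nat) (C : vec R (n 0%N) -> Prop) : Prop :=
  match k with
  | 0 => forall x, C x
  | k'.+1 => exists C0 Rc, @canonF k' C0 /\ isRcell Rc /\
      (forall x, C x <-> (C0 x /\ Rc (@Fto k' x))) /\ exists x, C x
  end.

(* The complex C(F^{(s+1)}) of the
   paper (F^{(s+1)} = G o F_m o ... o F_{s+1}) is canonB s (m.+1 - s). *)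
Fixpoint canonB (s t : nat) (C : vec R (n s) -> Prop) : Prop :=
  match t with
  | 0 => forall x, C x
  | t'.+1 => exists C0 (Rc : vec R (n (t' + s)%N) -> Prop),
      @canonB s t' C0 /\ isRcell Rc /\
      (forall x, C x <-> (C0 x /\ Rc (@Ffrom s t' x))) /\ exists x, C x
  end.

(* supertransversality: for 1 <= i <= m (here s = i-1 < m), F_i is transverse
   on cells of R^{(i)} to the interior of every cell of C(F^{(i+1)}) *)
Definition supertransversal : Prop :=
  forall s : nat, (s < m)%N ->
  forall (C : vec R (n s) -> Prop) (D : vec R (n s.+1) -> Prop),
    isRcell C -> @canonB s.+1 (m.+1 - s.+1)%N D ->
    transverse_on (@layer s) C (relint D).

(* sign sequence at x: entry (i+1, j) of the paper is sgn F_{i+1, j}(x) *)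
Definition signseq (x : vec R (n 0%N)) : forall i : 'I_m.+1, 'I_(n i.+1) -> int :=
  fun i j => sgz (@pre i (@Fto i x) j).

Definition sprod (s t : forall i : 'I_m.+1, 'I_(n i.+1) -> int) :
    forall i : 'I_m.+1, 'I_(n i.+1) -> int :=
  fun i j => if s i j != 0 then s i j else t i j.

End Network.

(* Main.v *)
Require Import Defs.
From HB Require Import structures.
From mathcomp Require Import all_boot all_order all_algebra.
From mathcomp Require Import reals.
From mathcomp Require Import ring lra zify.
From Stdlib Require Import FunctionalExtensionality Eqdep_dec.
Import Order.TTheory GRing.Theory Num.Theory.
Local Open Scope ring_scope.

Set Implicit Arguments. Unset Strict Implicit. Unset Printing Implicit Defensive.

Section Vec.
Variable R : realType.

Definition small (k : nat) (v : vec R k) (e : R) := forall q, `|v q| < e.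

Lemma dotvD k (a x y : vec R k) :
  dotv a (fun l => x l + y l) = dotv a x + dotv a y.
Proof. by rewrite /dotv -big_split; apply: eq_bigr => l _; rewrite mulrDr. Qed.

Lemma dotvZ k (a x : vec R k) (c : R) :
  dotv a (fun l => c * x l) = c * dotv a x.
Proof. by rewrite /dotv mulr_sumr; apply: eq_bigr => l _; ring. Qed.

Lemma dotvB k (a x y : vec R k) :
  dotv a (fun l => x l - y l) = dotv a x - dotv a y.
Proof. by rewrite /dotv -sumrB; apply: eq_bigr => l _; ring. Qed.

Lemma dot_combo k p (a : vec R k) (c : 'I_p -> R) (u w : 'I_p -> vec R k) :
  dotv a (fun l => \sum_(i < p) c i * (u i l - w i l)) =
  \sum_(i < p) c i * (dotv a (u i) - dotv a (w i)).
Proof.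
rewrite /dotv; under eq_bigr do rewrite mulr_sumr.
rewrite exchange_big; apply: eq_bigr => i _.
rewrite -sumrB mulr_sumr; apply: eq_bigr => l _; ring.
Qed.

Lemma dir_diff k (S : vec R k -> Prop) u w :
  S u -> S w -> dir S (fun j => u j - w j).
Proof.
move=> Su Sw; exists 1%N, (fun _ => 1), (fun _ => u), (fun _ => w); split=> //.
by move=> j; rewrite big_ord1 mul1r.
Qed.

Lemma dir0 k (S : vec R k -> Prop) : dir S (fun _ => 0).
Proof.
exists 0%N, (fun _ => 0), (fun _ => fun _ => 0), (fun _ => fun _ => 0).
by split=> [[]//|j]; rewrite big_ord0.
Qed.

Lemma dir_scale k (S : vec R k -> Prop) v (a : R) :
  dir S v -> dir S (fun j => a * v j).
Proof.
move=> [p [c [u [w [H1 H2]]]]]; exists p, (fun i => a * c i), u, w; split=> // j.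
by rewrite H2 mulr_sumr; apply: eq_bigr => i _; ring.
Qed.

Lemma dir_add k (S : vec R k -> Prop) v1 v2 :
  dir S v1 -> dir S v2 -> dir S (fun j => v1 j + v2 j).
Proof.
move=> [p [c [u [w [H1 H2]]]]] [p' [c' [u' [w' [H1' H2']]]]].
exists (p + p')%N, (fun i => match split i with inl a => c a | inr b => c' b end),
  (fun i => match split i with inl a => u a | inr b => u' b end),
  (fun i => match split i with inl a => w a | inr b => w' b end).
split=> [i|j]; first by case: (split i).
rewrite big_split_ord H2 H2'; congr (_ + _); apply: eq_bigr => i _.
  by rewrite -/(unsplit (inl i)) unsplitK.
by rewrite -/(unsplit (inr i)) unsplitK.
Qed.

Lemma dir_sub k (S : vec R k -> Prop) v1 v2 :
  dir S v1 -> dir S v2 -> dir S (fun j => v1 j - v2 j).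
Proof.
move=> H1 H2; have := dir_add H1 (dir_scale (-1) H2).
by congr dir; apply: functional_extensionality => j; ring.
Qed.

Lemma dir_mono k (S T : vec R k -> Prop) v :
  (forall z, S z -> T z) -> dir S v -> dir T v.
Proof.
move=> ST [p [c [u [w [H1 H2]]]]]; exists p, c, u, w; split=> // i.
by have [? ?] := H1 i; split; apply: ST.
Qed.

Lemma dir_dot k (S : vec R k -> Prop) (g : vec R k -> R) a b v :
  (forall z, S z -> g z = dotv a z + b) -> dir S v ->
  exists p (c : 'I_p -> R) (u w : 'I_p -> vec R k),
    (forall i, S (u i) /\ S (w i)) /\
    dotv a v = \sum_(i < p) c i * (g (u i) - g (w i)).
Proof.
move=> Hg [p [c [u [w [H1 H2]]]]]; exists p, c, u, w; split=> //.
have -> : v = (fun l => \sum_(i < p) c i * (u i l - w i l)).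
  by apply: functional_extensionality.
rewrite dot_combo; apply: eq_bigr => i _.
by have [? ?] := H1 i; rewrite !Hg //; ring.
Qed.

Lemma dir_dot0 k (S : vec R k -> Prop) (g : vec R k -> R) a b v :
  (forall z, S z -> g z = dotv a z + b) -> (forall z, S z -> g z = 0) ->
  dir S v -> dotv a v = 0.
Proof.
move=> Hg H0 Hv; have [p [c [u [w [H1 ->]]]]] := dir_dot Hg Hv.
by rewrite big1 // => i _; have [? ?] := H1 i; rewrite !H0 // subrr mulr0.
Qed.

Lemma dir_app k b (S : vec R k -> Prop) (T : vec R b -> Prop)
    (f : vec R k -> vec R b) (M : 'I_b -> vec R k) (c : vec R b) v :
  (forall z, S z -> T (f z)) ->
  (forall z, S z -> forall j, f z j = dotv (M j) z + c j) ->
  dir S v -> dir T (fun j => dotv (M j) v).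
Proof.
move=> ST Hf [p [cc [u [w [H1 H2]]]]].
exists p, cc, (fun i => f (u i)), (fun i => f (w i)); split.
  by move=> i; have [? ?] := H1 i; split; apply: ST.
move=> j.
have -> : v = (fun l => \sum_(i < p) cc i * (u i l - w i l)).
  by apply: functional_extensionality.
rewrite dot_combo; apply: eq_bigr => i _.
by have [? ?] := H1 i; rewrite !Hf //; ring.
Qed.

Lemma realize k b (S : vec R k -> Prop) (f : vec R k -> vec R b)
    (M : 'I_b -> vec R k) (c : vec R b) eta :
  (forall z, S z -> forall j, f z j = dotv (M j) z + c j) ->
  dir (fun y => exists z, S z /\ y = f z) eta ->
  exists d, dir S d /\ forall j, eta j = dotv (M j) d.
Proof.
move=> Hf [p [cc [u [w [H1 H2]]]]].
have [u' Hu'] := fin_all_exists (fun i => proj1 (H1 i)).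
have [w' Hw'] := fin_all_exists (fun i => proj2 (H1 i)).
exists (fun l => \sum_(i < p) cc i * (u' i l - w' i l)); split.
  exists p, cc, u', w'; split=> // i.
  by have [? _] := Hu' i; have [? _] := Hw' i.
move=> j; rewrite H2 dot_combo; apply: eq_bigr => i _.
have [Su ->] := Hu' i; have [Sw ->] := Hw' i.
by rewrite !Hf //; ring.
Qed.

Lemma norm_dot_le k (a v : vec R k) e :
  small v e -> `|dotv a v| <= e * \sum_(q < k) `|a q|.
Proof.
move=> Hv; rewrite /dotv mulr_sumr.
apply: le_trans (ler_norm_sum _ _ _) _.
apply: ler_sum => q _; rewrite normrM mulrC.
by apply: ler_wpM2r => //; apply: ltW.
Qed.

Lemma sgz_add_small (g d : R) : `|d| < `|g| -> sgz (g + d) = sgz g.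
Proof.
move=> H; move: (H); rewrite ltr_norml => /andP [H1 H2].
have [Hg|Hg|Hg] := ltgtP g 0.
- rewrite ltr0_norm // in H1 H2.
  by apply/eqP; rewrite (eqP (_ : sgz g == -1)) ?sgz_cp0 //; lra.
- rewrite gtr0_norm // in H1 H2.
  by apply/eqP; rewrite (eqP (_ : sgz g == 1)) ?sgz_cp0 //; lra.
- by move: H; rewrite Hg normr0 ltNge normr_ge0.
Qed.

Lemma small_t (I : finType) (a b : I -> R) :
  (forall i, 0 < a i) -> exists t, 0 < t /\ forall i, t * `|b i| < a i.
Proof.
move=> Ha; set s := \sum_i `|b i| / a i.
have s0 : 0 <= s by apply: sumr_ge0 => i _; apply: divr_ge0 => //; apply: ltW.
exists (1 + s)^-1; split; first by rewrite invr_gt0; lra.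
move=> i; have Hi : `|b i| / a i <= s.
  rewrite /s (bigD1 i) //= lerDl; apply: sumr_ge0 => j _.
  by apply: divr_ge0 => //; apply: ltW.
have Hai := Ha i.
have Hb : `|b i| <= s * a i by rewrite -ler_pdivrMr.
rewrite mulrC ltr_pdivrMr; last lra.
rewrite mulrDr mulr1 [a i * s]mulrC; lra.
Qed.

End Vec.

Unset Implicit Arguments.

Section Net.
Variable R : realType.
Variable m : nat.
Variable n : nat -> nat.
Variable W : forall i : nat, 'I_(n i.+1) -> 'I_(n i) -> R.
Variable bias : forall i : nat, 'I_(n i.+1) -> R.

Local Notation pre := (@pre R n W bias).
Local Notation layer := (@layer R m n W bias).
Local Notation FT k := (@Fto R m n W bias k).
Local Notation FF s t := (@Ffrom R m n W bias s t).
Local Notation LY k := (@Defs.layer R m n W bias k).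
Local Notation RC p := (@regcell R n W bias p).

Definition state := {p : nat & vec R (n p)}.
Definition gstep (e : state) : state :=
  existT _ (projT1 e).+1 (layer (projT2 e)).
Definition evg (a i : nat) (z : vec R (n a)) : state := iter i gstep (existT _ a z).
Definition nv (e : state) (l : nat) : R :=
  match (insub l : option 'I_(n (projT1 e).+1)) with
  | Some j => pre (projT2 e) j
  | None => 0
  end.
Definition cons (s : int) (v : R) : Prop := v = 0 \/ sgz v = s.
Definition Cell (a t : nat) (sg : nat -> nat -> int) (z : vec R (n a)) : Prop :=
  forall i, (i < t)%N -> forall l, cons (sg (i + a)%N l) (nv (evg a i z) l).
Definition sgw (w : vec R (n 0)) (p l : nat) : int := sgz (nv (evg 0 p w) l).

Lemma evg_Fto k w : evg 0 k w = existT _ k (FT k w).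
Proof. by elim: k => //= k; rewrite /evg /= => ->. Qed.

Lemma evg_Ffrom s t h : evg s t h = existT _ (t + s)%N (FF s t h).
Proof. by elim: t => //= t; rewrite /evg /= => ->. Qed.

Lemma evg_split k i w : evg k i (FT k w) = evg 0 (i + k) w.
Proof. by rewrite /evg iterD -/(evg 0 k w) evg_Fto. Qed.

Lemma evg_layer k i q : evg k i.+1 q = evg k.+1 i (LY k q).
Proof. by rewrite /evg iterSr. Qed.

Lemma evgS a i z : evg a i.+1 z = gstep (evg a i z).
Proof. by []. Qed.

Lemma projT1_evg a i z : projT1 (evg a i z) = (i + a)%N.
Proof. by elim: i => //= i; rewrite /evg /= => ->. Qed.

Lemma nv_ex p v (j : 'I_(n p.+1)) : nv (existT _ p v) (val j) = pre v j.
Proof. by rewrite /nv /= valK. Qed.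

Lemma nv_out e l : (n (projT1 e).+1 <= l)%N -> nv e l = 0.
Proof. by move=> H; rewrite /nv insubF //; apply/negbTE; rewrite -leqNgt. Qed.

Lemma sgz_cons s v : sgz v = s -> cons s v.
Proof. by right. Qed.

Lemma cons0 s : cons s 0.
Proof. by left. Qed.

Lemma consAll_ex p v (tau : nat -> int) :
  (forall l, cons (tau l) (nv (existT _ p v) l)) <->
  (forall j : 'I_(n p.+1), cons (tau (val j)) (pre v j)).
Proof.
split=> H.
  by move=> j; rewrite -nv_ex.
move=> l; case: (ltnP l (n p.+1)) => Hl.
  by have := H (Ordinal Hl); rewrite -nv_ex.
by rewrite nv_out //; left.
Qed.

Lemma Cell_S a t sg z :
  Cell a t.+1 sg z <->
  Cell a t sg z /\ forall l, cons (sg (t + a)%N l) (nv (evg a t z) l).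
Proof.
split.
  by move=> H; split; [move=> i Hi; apply: H; apply: ltnW | apply: H].
move=> [H1 H2] i; rewrite ltnS leq_eqVlt => /orP [/eqP -> //|Hi].
exact: H1.
Qed.

Lemma Cell_le a t t' sg z : (t' <= t)%N -> Cell a t sg z -> Cell a t' sg z.
Proof. by move=> Ht H i Hi; apply: H; apply: leq_trans Ht. Qed.

Lemma cons_sgz s v : cons s v -> sgz v = 0 \/ sgz v = s.
Proof. by case=> [->|->]; [left; rewrite sgz0| right]. Qed.

(* selection of the ReLU linear piece *)
Definition Lsel p (tau : nat -> int) : 'I_(n p.+1) -> vec R (n p) :=
  fun j => if (p < m)%N && (tau (val j) != 1) then (fun _ => 0) else W p j.
Definition csel p (tau : nat -> int) : vec R (n p.+1) :=
  fun j => if (p < m)%N && (tau (val j) != 1) then 0 else bias p j.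

Lemma dotv0 k (z : vec R k) : dotv (fun _ => 0) z = 0.
Proof. by rewrite /dotv big1 // => l _; rewrite mul0r. Qed.

Lemma preE p (v : vec R (n p)) j : pre v j = dotv (W p j) v + bias p j.
Proof. by []. Qed.

Lemma layer_sel p tau (v : vec R (n p)) :
  (forall j : 'I_(n p.+1), cons (tau (val j)) (pre v j)) ->
  forall j, layer v j = dotv (Lsel p tau j) v + csel p tau j.
Proof.
move=> H j; rewrite /layer /Lsel /csel.
case: ltnP => Hp /=; last by rewrite preE.
have := H j; case: eqP => [-> | Ht] /= Hc.
  rewrite max_l //; case: Hc => [-> //| Hs].
  by rewrite -sgz_ge0 Hs.
rewrite max_r; first by rewrite dotv0 addr0.
case: Hc => [-> //| Hs].
case: (lerP (pre v j) 0) => // Hn.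
by case: Ht; rewrite -Hs; apply/eqP; rewrite sgz_cp0.
Qed.

Lemma dot_aff k b (L : vec R b) (M : 'I_b -> vec R k) (c : vec R b) z :
  dotv L (fun r => dotv (M r) z + c r) =
  dotv (fun q => \sum_(r < b) L r * M r q) z + dotv L c.
Proof.
rewrite dotvD; congr (_ + _); rewrite /dotv.
under eq_bigr do rewrite mulr_sumr.
rewrite exchange_big; apply: eq_bigr => q _; rewrite mulr_suml.
by apply: eq_bigr => r _; rewrite mulrA.
Qed.

Lemma AffCell a i sg :
  exists (M : 'I_(n (i + a)) -> vec R (n a)) (c : vec R (n (i + a))),
    forall z, Cell a i sg z -> evg a i z = existT _ (i + a)%N (fun j => dotv (M j) z + c j).
Proof.
elim: i => [|i [M [c IH]]].
  exists (fun j q => ((val j == val q)%:R : R)), (fun _ => 0) => z _.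
  rewrite /evg /=; congr existT; apply: functional_extensionality => j.
  rewrite addr0 /dotv (bigD1 j) //= eqxx mul1r big1 ?addr0 // => q Hq.
  have -> : (val j == val q) = false by apply/negbTE; rewrite eq_sym; exact: Hq.
  by rewrite mul0r.
pose tau := sg (i + a)%N.
exists (fun j q => \sum_(r < n (i + a)) Lsel (i + a) tau j r * M r q).
exists (fun j => dotv (Lsel (i + a) tau j) c + csel (i + a) tau j).
move=> z /Cell_S [Hz Hl]; rewrite evgS IH //=; congr existT.
apply: functional_extensionality => j.
rewrite (layer_sel (i + a) tau) ?dot_aff ?addrA //.
by move=> jj; have := Hl (val jj); rewrite IH // nv_ex.
Qed.

Lemma NodeAff a i sg :
  exists (al : nat -> vec R (n a)) (be : nat -> R),
    forall z, Cell a i sg z -> forall l, nv (evg a i z) l = dotv (al l) z + be l.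
Proof.
have [M [c H]] := AffCell a i sg.
exists (fun l => match (insub l : option 'I_(n (i + a).+1)) with
         | Some j => fun q => \sum_(r < n (i + a)) W (i + a) j r * M r q
         | None => fun _ => 0 end).
exists (fun l => match (insub l : option 'I_(n (i + a).+1)) with
         | Some j => dotv (W (i + a) j) c + bias (i + a) j
         | None => 0 end).
move=> z Hz l; rewrite H // /nv /=.
case: (insub l) => [j|]; last by rewrite dotv0 addr0.
by rewrite preE dot_aff addrA.
Qed.

Lemma relint_zero k (S : vec R k -> Prop) (g : vec R k -> R) a b s x z :
  (forall q, S q -> g q = dotv a q + b) ->
  (forall q, S q -> cons s (g q)) ->
  relint S x -> S z -> g x = 0 -> g z = 0.
Proof.
move=> Hg Hc [Sx [eps [e0 He]]] Sz gx0.
apply/eqP; apply: contraT => gz.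
have [t [t0 Ht]] := @small_t R _ (fun _ : 'I_k => eps) (fun l => x l - z l) (fun _ => e0).
pose v := fun l => t * (x l - z l).
have Dv : dir S v := dir_scale t (dir_diff Sx Sz).
have Sv : S (fun j => x j + v j).
  by apply: He => // q; rewrite /v normrM gtr0_norm //; exact: Ht.
have hx : dotv a x = - b by move: gx0; rewrite Hg // => /eqP; rewrite addr_eq0 => /eqP.
have E : g (fun j => x j + v j) = - t * g z.
  by rewrite Hg // dotvD /v dotvZ dotvB (Hg z) // hx; ring.
have := Hc _ Sv; have := Hc _ Sz; rewrite E.
case=> [/eqP|Hs]; first by rewrite (negbTE gz).
case=> [/eqP|Hs'].
  by rewrite mulf_eq0 (negbTE gz) orbF oppr_eq0 => /eqP Ht0; move: t0; rewrite Ht0 ltxx.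
move: Hs'; rewrite sgzM sgzN (_ : sgz t = 1); last by apply/eqP; rewrite sgz_cp0.
rewrite -Hs => /eqP; rewrite mulN1r -subr_eq0 -opprD oppr_eq0 -mulr2n mulrn_eq0 /= sgz_eq0.
by rewrite (negbTE gz).
Qed.

Lemma SignStable a t sg w :
  (forall i, (i < t)%N -> forall l, sgz (nv (evg a i w) l) = sg (i + a)%N l) ->
  exists eps, 0 < eps /\ forall v, dir (Cell a t sg) v -> small v eps ->
    forall i, (i < t)%N -> forall l,
      sgz (nv (evg a i (fun q => w q + v q)) l) = sg (i + a)%N l.
Proof.
move=> Hw.
suff H : forall t', (t' <= t)%N -> exists eps, 0 < eps /\
    forall v, dir (Cell a t sg) v -> small v eps ->
    forall i, (i < t')%N -> forall l,
      sgz (nv (evg a i (fun q => w q + v q)) l) = sg (i + a)%N l.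
  exact: H.
elim=> [_|t' IH Ht'].
  by exists 1; split => // v _ _ i.
have [eps0 [e0 H0]] := IH (ltnW Ht').
have [al [be Hab]] := NodeAff a t' sg.
pose N := n (t' + a).+1.
have Hpos : forall j : 'I_N, 0 < (if nv (evg a t' w) (val j) != 0
    then `|nv (evg a t' w) (val j)| else 1).
  by move=> j; case: ifP => // H; rewrite normr_gt0.
have [eps1 [e1 H1]] := @small_t R _
   (fun j : 'I_N => if nv (evg a t' w) (val j) != 0 then `|nv (evg a t' w) (val j)| else 1)
   (fun j : 'I_N => \sum_(q < n a) `|al (val j) q|) Hpos.
exists (Num.min eps0 eps1); split; first by rewrite lt_min e0 e1.
move=> v Dv Sv.
have Sv0 : small v eps0 by move=> q; apply: lt_le_trans (Sv q) _; rewrite ge_min lexx.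
have Sv1 : small v eps1 by move=> q; apply: lt_le_trans (Sv q) _; rewrite ge_min lexx orbT.
move=> i; rewrite ltnS leq_eqVlt => /orP [/eqP -> | Hi] l; last exact: H0.
have Cw : Cell a t' sg w.
  by move=> i0 Hi l'; apply: sgz_cons; apply: Hw; apply: ltn_trans Hi Ht'.
have Cwv : Cell a t' sg (fun q => w q + v q).
  by move=> i0 Hi0 l'; apply: sgz_cons; apply: H0.
rewrite (Hab _ Cwv) dotvD -addrA [dotv _ v + _]addrC addrA -Hab //.
rewrite -(Hw t' Ht' l).
case: (eqVneq (nv (evg a t' w) l) 0) => Hn.
  rewrite Hn add0r.
  have -> : dotv (al l) v = 0; last by [].
  apply: (@dir_dot0 R (n a) (Cell a t sg) (fun z => nv (evg a t' z) l) (al l) (be l) v) => //.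
    by move=> z Hz; apply: Hab; apply: Cell_le Hz; apply: ltnW.
  move=> z Hz; have := Hz t' Ht' l; rewrite -(Hw t' Ht' l) Hn sgz0.
  by case=> // /eqP; rewrite sgz_eq0 => /eqP.
apply: sgz_add_small.
case: (ltnP l N) => Hl; last first.
  by move: Hn; rewrite nv_out ?eqxx // projT1_evg.
have := H1 (Ordinal Hl); rewrite /= Hn => H1l.
apply: le_lt_trans (norm_dot_le (al l) Sv1) _.
move: H1l; rewrite ger0_norm //; apply: sumr_ge0 => q _; exact: normr_ge0.
Qed.

Lemma relint_cell a t sg w :
  (forall i, (i < t)%N -> forall l, sgz (nv (evg a i w) l) = sg (i + a)%N l) ->
  relint (Cell a t sg) w.
Proof.
move=> Hw; split.
  by move=> i Hi l; apply: sgz_cons; apply: Hw.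
have [eps [e0 He]] := SignStable a t sg w Hw.
exists eps; split=> // v Dv Sv i Hi l; apply: sgz_cons; exact: He.
Qed.

Definition tauOf (s : int) : choice3 :=
  if s == 1 then ChGe else if s == -1 then ChLe else ChEq.
Definition tint (c : choice3) : int :=
  match c with ChGe => 1 | ChLe => -1 | ChEq => 0 end.

Lemma tauOf_tint c : tauOf (tint c) = c.
Proof. by case: c. Qed.

Lemma cons_tau s (x : R) :
  (match tauOf s with ChGe => 0 <= x | ChLe => x <= 0 | ChEq => x == 0 end)
  <-> cons s x.
Proof.
rewrite /tauOf; case: eqP => [->|H1]; [|case: eqP => [->|H2]].
- split=> [Hx|[->//|Hs]]; last by rewrite -sgz_ge0 Hs.
  move: Hx; rewrite le_eqVlt => /orP [/eqP <-|Hx]; first by left.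
  by right; apply/eqP; rewrite sgz_cp0.
- split=> [Hx|[->//|Hs]]; last by rewrite -sgz_le0 Hs.
  move: Hx; rewrite le_eqVlt => /orP [/eqP ->|Hx]; first by left.
  by right; apply/eqP; rewrite sgz_cp0.
- split=> [/eqP ->|[->//|Hs]]; first by left.
  have [Hn|Hn|Hn] := ltgtP x 0; last by apply/eqP.
    by case: H2; rewrite -Hs; apply/eqP; rewrite sgz_cp0.
  by case: H1; rewrite -Hs; apply/eqP; rewrite sgz_cp0.
Qed.

Lemma regcell_cons p (tau : nat -> int) v :
  RC p (fun j => tauOf (tau (val j))) v <->
  forall j : 'I_(n p.+1), cons (tau (val j)) (pre v j).
Proof.
rewrite /regcell; split=> H j.
  by apply/(cons_tau _ _).1; move: (H j); case: (tauOf (tau (val j))).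
by move: (H j) => /(cons_tau _ _).2; case: (tauOf (tau (val j))).
Qed.

Lemma canonB_Cell s t sg h0 :
  Cell s t sg h0 -> @canonB R m n W bias s t (Cell s t sg).
Proof.
elim: t h0 => [|t IH] h0 H0 /=.
  by move=> x i.
have [Ht Hl] := (Cell_S _ _ _ _).1 H0.
exists (Cell s t sg), (fun v => RC (t + s)%N (fun j => tauOf (sg (t + s)%N (val j))) v).
split; first exact: IH Ht.
split.
  split; first by exists (fun j => tauOf (sg (t + s)%N (val j))) => x; split.
  exists (FF s t h0); apply/regcell_cons; apply/consAll_ex.
  by rewrite -evg_Ffrom.
split; last by exists h0.
move=> x; split.
  move=> /Cell_S [H1 H2]; split=> //.
  by apply/regcell_cons; apply/consAll_ex; rewrite -evg_Ffrom.
move=> [H1 H2]; apply/Cell_S; split=> //.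
by move/regcell_cons/consAll_ex: H2; rewrite -evg_Ffrom.
Qed.

Lemma canonF_Cell k sg z0 :
  Cell 0 k sg z0 -> @canonF R m n W bias k (Cell 0 k sg).
Proof.
elim: k z0 => [|k IH] z0 H0 /=.
  by move=> x i.
have [Ht Hl] := (Cell_S _ _ _ _).1 H0.
rewrite addn0 in Hl.
exists (Cell 0 k sg), (fun v => RC k (fun j => tauOf (sg k (val j))) v).
split; first exact: IH Ht.
split.
  split; first by exists (fun j => tauOf (sg k (val j))) => x; split.
  exists (FT k z0); apply/regcell_cons; apply/consAll_ex.
  by rewrite -evg_Fto.
split; last by exists z0.
move=> x; split.
  move=> /Cell_S [H1 H2]; split=> //.
  rewrite addn0 in H2.
  by apply/regcell_cons; apply/consAll_ex; rewrite -evg_Fto.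
move=> [H1 H2]; apply/(Cell_S 0 k sg x).2; split=> //.
by move/regcell_cons/consAll_ex: H2; rewrite -evg_Fto addn0.
Qed.

Lemma Cell_of_canonF k C :
  @canonF R m n W bias k C -> exists sg, forall z, C z <-> Cell 0 k sg z.
Proof.
elim: k C => [|k IH] C /=.
  by move=> H; exists (fun _ _ => 0) => z; split=> // _; apply: H.
move=> [C0 [Rc [H0 [[[tau Htau] _] [HC _]]]]].
have [sg Hsg] := IH C0 H0.
pose tauN l := match (insub l : option 'I_(n k.+1)) with
               | Some j => tint (tau j) | None => 0 end.
have HtauN : forall j : 'I_(n k.+1), tauN (val j) = tint (tau j).
  by move=> j; rewrite /tauN valK.
exists (fun p l => if p == k then tauN l else sg p l) => z.
have E1 : Cell 0 k (fun p l => if p == k then tauN l else sg p l) z <-> Cell 0 k sg z.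
  split=> H i Hi l; have := H i Hi l; rewrite addn0;
    by rewrite (_ : (i == k) = false) //; apply/negbTE; rewrite neq_ltn Hi.
have E2 : RC k tau (FT k z) <-> RC k (fun j => tauOf (tauN (val j))) (FT k z).
  have -> : (fun j : 'I_(n k.+1) => tauOf (tauN (val j))) = tau.
    by apply: functional_extensionality => j; rewrite HtauN tauOf_tint.
  by [].
split.
  move=> /HC [/Hsg H1 /Htau H2]; apply/Cell_S; split; first exact/E1.
  rewrite addn0 eqxx evg_Fto; apply/consAll_ex; apply/regcell_cons; exact/E2.
move=> /Cell_S [/E1 H1 H2]; apply/HC; split; first exact/Hsg.
apply/Htau/E2/regcell_cons/consAll_ex; rewrite -evg_Fto.
by move: H2; rewrite addn0 eqxx.
Qed.

Lemma Fto_aff k sg : exists (M : 'I_(n k) -> vec R (n 0)) (c : vec R (n k)),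
  forall z, Cell 0 k sg z -> forall j, FT k z j = dotv (M j) z + c j.
Proof.
have := AffCell 0 k sg; rewrite addn0 => -[M [c H]].
exists M, c => z Hz j.
have := H z Hz; rewrite evg_Fto => /(inj_pair2_eq_dec nat (@eq_comparable nat) (fun p => vec R (n p))) ->.
by [].
Qed.

Lemma nv_Fto k w (j : 'I_(n k.+1)) : nv (evg 0 k w) (val j) = pre (FT k w) j.
Proof. by rewrite evg_Fto nv_ex. Qed.

Lemma sgs_Fto k t w : forall i, (i < t)%N -> forall l,
  sgz (nv (evg k i (FT k w)) l) = sgw w (i + k)%N l.
Proof. by move=> i _ l; rewrite evg_split. Qed.

Lemma sgs_E k w : forall i, (i < k)%N -> forall l,
  sgz (nv (evg 0 i w) l) = sgw w (i + 0)%N l.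
Proof. by move=> i _ l; rewrite addn0. Qed.

Lemma Cell1 k sg x : Cell k 1 sg x <-> forall j : 'I_(n k.+1), cons (sg k (val j)) (pre x j).
Proof.
split=> H.
  by apply/consAll_ex => l; exact: (H 0%N erefl l).
by move=> i; rewrite ltnS leqn0 => /eqP -> l; apply/consAll_ex: l.
Qed.

Lemma isRcell_Cell1 k sg x0 : Cell k 1 sg x0 -> @isRcell R n W bias k (Cell k 1 sg).
Proof.
move=> H0; split; last by exists x0.
exists (fun j => tauOf (sg k (val j))) => x.
split=> [/Cell1 H|H]; first exact/regcell_cons.
by apply/Cell1/regcell_cons.
Qed.

Lemma layer_on_C k sg tau x :
  (forall l, sg k l != 0 -> tau l = sg k l) ->
  Cell k 1 sg x -> forall j, LY k x j = dotv (Lsel k tau j) x + csel k tau j.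
Proof.
move=> H1 /Cell1 Hx; apply: layer_sel => j.
have := Hx j; case: (eqVneq (sg k (val j)) 0) => Hs Hc; last by rewrite H1.
have -> : pre x j = 0 by case: Hc => // /eqP; rewrite Hs sgz_eq0 => /eqP.
by left.
Qed.

Lemma P_layer k t sg z : Cell k t.+1 sg z -> Cell k.+1 t sg (LY k z).
Proof.
move=> H i Hi l; have := H i.+1 Hi l.
by rewrite evg_layer addSnnS.
Qed.

Definition Img k w := fun y : vec R (n k) => exists z, Cell 0 k (sgw w) z /\ y = FT k z.
Definition Pc k w := Cell k (m.+1 - k) (sgw w).

Lemma cons_u s t v : cons s v -> cons (if s != 0 then s else t) v.
Proof.
move=> Hc; case: (eqVneq s 0) => [Hs|Hs] /=; last by [].
case: Hc => [->|Hv]; first by left.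
by left; apply/eqP; rewrite -sgz_eq0 Hv Hs.
Qed.

Lemma small_min (k : nat) (v : vec R k) e1 e2 : small v (Num.min e1 e2) -> small v e1 /\ small v e2.
Proof.
move=> H; split=> q; apply: lt_le_trans (H q) _; by rewrite ge_min lexx ?orbT.
Qed.

Lemma small_scale (k : nat) (v : vec R k) t t0 e :
  0 < t -> t <= t0 -> (forall q, t0 * `|v q| < e) -> small (fun q => t * v q) e.
Proof.
move=> Ht Htt H q; rewrite normrM gtr0_norm //.
apply: le_lt_trans (H q); apply: ler_wpM2r => //.
Qed.

Lemma Inv (Hst : @supertransversal R m n W bias) k : (k <= m)%N ->
  forall w (r : vec R (n k)), exists v p,
    dir (Img k w) v /\ dir (Pc k w) p /\ forall j, r j = v j + p j.
Proof.
elim: k => [_|k IH Hk] w r.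
  exists r, (fun _ => 0); split; last by split; [exact: dir0| move=> j; rewrite addr0].
  have Hr : Img 0 w r by exists r; split=> // i.
  have H0 : Img 0 w (fun _ => 0) by exists (fun _ => 0); split=> // i.
  have := dir_diff Hr H0; congr dir; apply: functional_extensionality => j; by rewrite subr0.
have Hkm : (k < m)%N by [].
set sg := sgw w.
set h := FT k w.
pose Cc := Cell k 1 sg.
pose Dd := Pc k.+1 w.
have HC : Cell k 1 sg h by move=> i Hi l; apply: sgz_cons; rewrite /h evg_split.
have rC : relint Cc h by apply: relint_cell => i Hi l; rewrite /h evg_split.
have rD : relint Dd (LY k h) by apply: relint_cell => i Hi l; rewrite /h -/(FT k.+1 w) evg_split.
have HT := Hst k Hkm Cc Dd (isRcell_Cell1 _ _ _ HC) (canonB_Cell _ _ _ _ (proj1 rD)).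
pose L := Lsel k (sg k); pose c := csel k (sg k).
have HLC : forall x, Cc x -> forall j, LY k x j = dotv (L j) x + c j.
  by move=> x Hx j; apply: (layer_on_C k sg (sg k) x).
have [a [d [Da [Dd' Hr]]]] := HT L c (fun x Hx => HLC x (proj1 Hx)) h rC rD r.
have DaC : dir Cc a by apply: dir_mono Da => z [].
have DdD : dir Dd d by apply: dir_mono Dd' => z [].
have [v0 [p0 [Dv0 [Dp0 Ha]]]] := IH (ltnW Hk) w a.
have PC : forall z, Pc k w z -> Cc z.
  by move=> z; apply: (Cell_le k (m.+1 - k) 1 sg z); rewrite subn_gt0 ltnS ltnW.
have Dp0C : dir Cc p0 := dir_mono PC Dp0.
have Ev0 : v0 = (fun j => a j - p0 j).
  by apply: functional_extensionality => j; rewrite Ha; ring.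
have Dv0C : dir Cc v0 by rewrite Ev0; apply: dir_sub.
have [M [cM HM]] := Fto_aff k sg.
have [del [Ddel Hdel]] := realize HM Dv0.
have [epsE [eE HE]] := SignStable 0 k sg w (sgs_E k w).
have [epsC [eC HCs]] := SignStable k 1 sg h (sgs_Fto k 1 w).
have [t1 [t10 Ht1]] := @small_t R _ (fun _ : 'I_(n 0) => epsE) del (fun _ => eE).
have [t2 [t20 Ht2]] := @small_t R _ (fun _ : 'I_(n k) => epsC) v0 (fun _ => eC).
set t := Num.min t1 t2.
have t0 : 0 < t by rewrite lt_min t10 t20.
have tle1 : t <= t1 by rewrite ge_min lexx.
have tle2 : t <= t2 by rewrite ge_min lexx orbT.
pose w' := fun q => w q + t * del q.
have Sw' := HE (fun q => t * del q) (dir_scale t Ddel) (small_scale _ _ _ _ _ t0 tle1 Ht1).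
have Ew' : Cell 0 k sg w' by move=> i Hi l; apply: sgz_cons; rewrite -Sw' // addn0.
have Ew : Cell 0 k sg w by move=> i Hi l; apply: sgz_cons; rewrite addn0.
have FTw' : FT k w' = (fun j => h j + t * v0 j).
  apply: functional_extensionality => j.
  by rewrite (HM _ Ew') /h (HM _ Ew) /w' dotvD dotvZ Hdel; ring.
have Sh' := HCs (fun q => t * v0 q) (dir_scale t Dv0C) (small_scale _ _ _ _ _ t0 tle2 Ht2).
have Ch' : Cc (fun j => h j + t * v0 j).
  by move=> i Hi l; apply: sgz_cons; rewrite -Sh'.
have E1w' : Cell 0 k.+1 sg w'.
  apply/Cell_S; split=> // l; rewrite evg_Fto FTw' addn0.
  have := Ch' 0%N erefl l; by [].
have DLv0 : dir (Img k.+1 w) (fun j => dotv (L j) v0).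
  have I1 : Img k.+1 w (FT k.+1 w') by exists w'.
  have I2 : Img k.+1 w (FT k.+1 w).
    by exists w; split=> // i Hi l; apply: sgz_cons; rewrite addn0.
  have := dir_scale t^-1 (dir_diff I1 I2); congr dir.
  apply: functional_extensionality => j; rewrite /= FTw' -/h.
  rewrite (HLC _ Ch') (HLC _ HC) dotvD dotvZ.
  by field; rewrite gt_eqF.
have DLp0 : dir Dd (fun j => dotv (L j) p0).
  apply: (@dir_app R _ _ (Pc k w) Dd (LY k) L c p0) => //.
    move=> z Hz; apply: P_layer; move: Hz; rewrite /Pc.
    by rewrite subSS -subSn // ltnW.
  by move=> z Hz; apply: HLC; apply: PC.
exists (fun j => dotv (L j) v0), (fun j => dotv (L j) p0 + d j); split=> //.
split; first exact: dir_add.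
move=> j; rewrite Hr -/(dotv (L j) a) addrA; congr (_ + _).
have -> : a = (fun l => v0 l + p0 l) by apply: functional_extensionality.
by rewrite dotvD.
Qed.


Definition uu (x y : vec R (n 0)) p l : int :=
  if sgw x p l != 0 then sgw x p l else sgw y p l.

Lemma Step (Hst : @supertransversal R m n W bias) x y k : (k <= m)%N -> forall w,
  (forall p l, (p < k)%N -> sgw w p l = uu x y p l) ->
  (forall p l, (k <= p)%N -> (p <= m)%N -> sgw w p l = sgw x p l) ->
  exists w', (forall p l, (p < k.+1)%N -> sgw w' p l = uu x y p l) /\
             (forall p l, (k.+1 <= p)%N -> (p <= m)%N -> sgw w' p l = sgw x p l).
Proof.
move=> Hk w Hlow Hhigh.
set sg := sgw w.
set h := FT k w.
pose Cc := Cell k 1 sg.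
pose Dd := Pc k.+1 w.
pose tu := uu x y k.
pose L := Lsel k tu; pose c := csel k tu.
have HC : Cell k 1 sg h by move=> i Hi l; apply: sgz_cons; rewrite /h evg_split.
have Hsgk : forall l, sg k l = sgw x k l := fun l => Hhigh k l (leqnn k) Hk.
have Htu : forall l, sg k l != 0 -> tu l = sg k l.
  by move=> l; rewrite /tu /uu -Hsgk => H; rewrite H.
have HLC : forall z, Cc z -> forall j, LY k z j = dotv (L j) z + c j :=
  fun z Hz j => layer_on_C k sg tu z Htu Hz j.
have Zkill : forall j : 'I_(n k.+1), sg k (val j) = 0 ->
    forall q, dir Cc q -> dotv (W k j) q = 0.
  move=> j Hj q Dq.
  apply: (@dir_dot0 R _ Cc (fun z => pre z j) (W k j) (bias k j) q) => //.
  move=> z /Cell1 Hz; have := Hz j; rewrite Hj; case=> // /eqP.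
  by rewrite sgz_eq0 => /eqP.
have PC : forall z, Pc k w z -> Cc z.
  by move=> z; apply: (Cell_le k (m.+1 - k) 1 sg z); rewrite subn_gt0 ltnS.
have Hh0 : forall j : 'I_(n k.+1), sg k (val j) = 0 -> pre h j = 0.
  move=> j Hj; have := (proj1 (Cell1 k sg h) HC) j; rewrite Hj; case=> // /eqP.
  by rewrite sgz_eq0 => /eqP.
pose eta0 := fun j => FT k y j - h j.
have [m0 [p0 [Dm0 [Dp0 Hm0]]]] := Inv Hst k Hk w eta0.
have Wm0 : forall j : 'I_(n k.+1), sg k (val j) = 0 -> dotv (W k j) m0 = pre (FT k y) j.
  move=> j Hj.
  have E0 : eta0 = (fun q => m0 q + p0 q) by apply: functional_extensionality.
  have : dotv (W k j) eta0 = dotv (W k j) m0 + dotv (W k j) p0 by rewrite E0 dotvD.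
  rewrite (Zkill j Hj p0 (dir_mono PC Dp0)) addr0 => <-.
  rewrite /eta0 dotvB; have := preE k (FT k y) j; have := preE k h j.
  rewrite Hh0 //; lra.
have [eta [Deta [Weta HDeta]]] : exists eta, dir (Img k w) eta /\
    (forall j : 'I_(n k.+1), sg k (val j) = 0 -> dotv (W k j) eta = pre (FT k y) j) /\
    ((k < m)%N -> dir Dd (fun j => dotv (L j) eta)).
  case: (ltnP k m) => Hkm; last first.
    by exists m0; split=> //; split=> // H; move: Hkm; rewrite leqNgt H.
  have rC : relint Cc h by apply: relint_cell => i Hi l; rewrite /h evg_split.
  have rD : relint Dd (LY k h).
    by apply: relint_cell => i Hi l; rewrite /h -/(FT k.+1 w) evg_split.
  have HT := Hst k Hkm Cc Dd (isRcell_Cell1 _ _ _ HC) (canonB_Cell _ _ _ _ (proj1 rD)).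
  have [a [d [Da [Dd' Hr]]]] :=
    HT L c (fun z Hz => HLC z (proj1 Hz)) h rC rD (fun j => dotv (L j) m0).
  have DaC : dir Cc a by apply: dir_mono Da => z [].
  have DdD : dir Dd d by apply: dir_mono Dd' => z [].
  have [ma [pa [Dma [Dpa Ha]]]] := Inv Hst k Hk w a.
  have Ema : ma = (fun j => a j - pa j).
    by apply: functional_extensionality => j; rewrite Ha; ring.
  have DmaC : dir Cc ma by rewrite Ema; apply: dir_sub => //; exact: dir_mono PC Dpa.
  exists (fun q => m0 q - ma q); split; first exact: dir_sub.
  split.
    by move=> j Hj; rewrite dotvB (Zkill j Hj ma DmaC) subr0; exact: Wm0.
  move=> _.
  have DLpa : dir Dd (fun j => dotv (L j) pa).
    apply: (@dir_app R _ _ (Pc k w) Dd (LY k) L c pa) => //.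
      move=> z Hz; apply: P_layer; move: Hz; rewrite /Pc.
      by rewrite subSS -subSn // ltnW.
    by move=> z Hz; apply: HLC; apply: PC.
  have := dir_add DdD DLpa; congr dir; apply: functional_extensionality => j.
  rewrite dotvB Ema dotvB; move: (Hr j); rewrite -/(dotv (L j) a) => ->; ring.
have [M [cM HM]] := Fto_aff k sg.
have [del [Ddel Hdel]] := realize HM Deta.
have [epsE [eE HE]] := SignStable 0 k sg w (sgs_E k w).
have [epsD [eD HD]] := SignStable k.+1 (m.+1 - k.+1) sg (FT k.+1 w) (sgs_Fto k.+1 (m.+1 - k.+1) w).
have [t1 [t10 Ht1]] := @small_t R _ (fun _ : 'I_(n 0) => epsE) del (fun _ => eE).
have [t2 [t20 Ht2]] := @small_t R _ (fun _ : 'I_(n k.+1) => epsD)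
   (fun j => dotv (L j) eta) (fun _ => eD).
have Hpos : forall j : 'I_(n k.+1), 0 < (if pre h j != 0 then `|pre h j| else 1).
  by move=> j; case: ifP => // H; rewrite normr_gt0.
have [t3 [t30 Ht3]] := @small_t R _ _ (fun j => dotv (W k j) eta) Hpos.
set t := Num.min t1 (Num.min t2 t3).
have t0 : 0 < t by rewrite !lt_min t10 t20 t30.
have tle1 : t <= t1 by rewrite ge_min lexx.
have tle2 : t <= t2 by rewrite !ge_min lexx orbT.
have tle3 : t <= t3 by rewrite !ge_min lexx !orbT.
pose w' := fun q => w q + t * del q.
have Sw' := HE (fun q => t * del q) (dir_scale t Ddel) (small_scale _ _ _ _ _ t0 tle1 Ht1).
have Ew' : Cell 0 k sg w' by move=> i Hi l; apply: sgz_cons; rewrite -Sw' // addn0.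
have Ew : Cell 0 k sg w by move=> i Hi l; apply: sgz_cons; rewrite addn0.
have FTw' : FT k w' = (fun j => h j + t * eta j).
  apply: functional_extensionality => j.
  by rewrite (HM _ Ew') /h (HM _ Ew) /w' dotvD dotvZ Hdel; ring.
have Hpre : forall j, pre (FT k w') j = pre h j + t * dotv (W k j) eta.
  by move=> j; rewrite FTw' !preE dotvD dotvZ; ring.
have Sk : forall j : 'I_(n k.+1), sgz (pre (FT k w') j) = tu (val j).
  move=> j; rewrite Hpre.
  have Hsj : sg k (val j) = sgz (pre h j) by rewrite /sg /sgw nv_Fto.
  case: (eqVneq (pre h j) 0) => Hh.
    have Hs0 : sg k (val j) = 0 by rewrite Hsj Hh sgz0.
    rewrite Hh add0r Weta // sgzM (_ : sgz t = 1); last by apply/eqP; rewrite sgz_cp0.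
    by rewrite mul1r /tu /uu -Hsgk Hs0 eqxx /= /sgw nv_Fto.
  rewrite Htu; last by rewrite Hsj sgz_eq0.
  rewrite Hsj; apply: sgz_add_small.
  have := Ht3 j; rewrite /= Hh => H3; rewrite normrM gtr0_norm //.
  by apply: le_lt_trans H3; apply: ler_wpM2r.
exists w'; split.
  move=> p l; rewrite ltnS leq_eqVlt => /orP [/eqP ->|Hp]; last first.
    by rewrite /sgw Sw' // addn0; exact: Hlow.
  rewrite /sgw; case: (ltnP l (n k.+1)) => Hl; last first.
    rewrite /uu /sgw !nv_out ?sgz0 ?eqxx //; by rewrite projT1_evg addn0.
  by have := Sk (Ordinal Hl); rewrite -nv_Fto.
move=> p l Hp Hpm.
have Hkm : (k < m)%N by apply: leq_trans Hpm.
have -> : p = ((p - k.+1) + k.+1)%N by rewrite subnK.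
set i := (p - k.+1)%N.
have Hi : (i < m.+1 - k.+1)%N by rewrite /i ltn_sub2r.
have HLw' : FT k.+1 w' = (fun j => FT k.+1 w j + t * dotv (L j) eta).
  apply: functional_extensionality => j.
  rewrite [FT k.+1 w' j]/= (layer_sel k tu (FT k w')); last by move=> jj; apply: sgz_cons; apply: Sk.
  rewrite [FT k.+1 w j]/= -/h (HLC h HC) FTw' dotvD dotvZ; by rewrite addrAC.
rewrite /sgw -(evg_split k.+1 i w') HLw'.
rewrite (HD (fun j => t * dotv (L j) eta) (dir_scale t (HDeta Hkm))
  (small_scale _ _ _ _ _ t0 tle2 Ht2) i Hi l).
rewrite /i subnK //.
exact: (Hhigh p l (ltnW Hp) Hpm).
Qed.


Lemma Build (Hst : @supertransversal R m n W bias) x y k : (k <= m.+1)%N ->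
  exists w, (forall p l, (p < k)%N -> sgw w p l = uu x y p l) /\
            (forall p l, (k <= p)%N -> (p <= m)%N -> sgw w p l = sgw x p l).
Proof.
elim: k => [_|k IH Hk]; first by exists x.
have [w [H1 H2]] := IH (ltnW Hk).
exact: (Step Hst x y k Hk w H1 H2).
Qed.

Lemma cons_trans s0 v0 v : cons s0 v0 -> cons (sgz v0) v -> cons s0 v.
Proof.
move=> H0 [->|Hv]; first by left.
case: (eqVneq v0 0) => Hv0.
  by left; apply/eqP; rewrite -sgz_eq0 Hv Hv0 sgz0.
by case: H0 => [/eqP|Hs]; [rewrite (negbTE Hv0) | right; rewrite Hv Hs].
Qed.

Lemma cons_mul_ge0 s v : cons s v -> 0 <= s%:~R * v.
Proof.
case=> [->|<-]; first by rewrite mulr0.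
by rewrite -sgrEz -normrEsg normr_ge0.
Qed.

Definition AffOn k (S : vec R k -> Prop) (f : vec R k -> R) :=
  exists (a : vec R k) b, forall z, S z -> f z = dotv a z + b.
Arguments AffOn [k] S f.

Lemma dotvDl k (a1 a2 z : vec R k) :
  dotv (fun q => a1 q + a2 q) z = dotv a1 z + dotv a2 z.
Proof. by rewrite /dotv -big_split; apply: eq_bigr => q _; rewrite mulrDl. Qed.

Lemma dotvZl k (a z : vec R k) c : dotv (fun q => c * a q) z = c * dotv a z.
Proof. by rewrite /dotv mulr_sumr; apply: eq_bigr => q _; rewrite mulrA. Qed.

Lemma dotvN k (a z : vec R k) : dotv (fun q => - a q) z = - dotv a z.
Proof. by rewrite /dotv -sumrN; apply: eq_bigr => q _; rewrite mulNr. Qed.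

Lemma aff_sum k (S : vec R k -> Prop) (I : Type) (r : seq I) (F : I -> vec R k -> R) :
  (forall i, AffOn S (F i)) -> AffOn S (fun z => \sum_(i <- r) F i z).
Proof.
elim: r => [|i r IH] HF.
  by exists (fun _ => 0), 0 => z _; rewrite big_nil dotv0 addr0.
have [a [b H]] := IH HF; have [a1 [b1 H1]] := HF i.
exists (fun q => a1 q + a q), (b1 + b) => z Hz.
by rewrite big_cons H1 // H // dotvDl; ring.
Qed.

Lemma aff_scale k (S : vec R k -> Prop) f c : AffOn S f -> AffOn S (fun z => c * f z).
Proof.
move=> [a [b H]]; exists (fun q => c * a q), (c * b) => z Hz.
by rewrite H // dotvZl; ring.
Qed.

Lemma main_in (Hst : @supertransversal R m n W bias) C D :
  @canonF R m n W bias m.+1 C -> @canonF R m n W bias m.+1 D ->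
  forall x y : vec R (n 0%N), relint C x -> relint D y ->
    exists E : vec R (n 0%N) -> Prop,
      @canonF R m n W bias m.+1 E /\ face_le C E /\
      forall z, relint E z ->
        forall (i : 'I_m.+1) (j : 'I_(n i.+1)),
          @signseq R m n W bias z i j =
          @sprod m n (@signseq R m n W bias x) (@signseq R m n W bias y) i j.
Proof.
move=> HCF _ x y rx _.
have [sgC HsgC] := Cell_of_canonF m.+1 C HCF.
have Cx := proj1 rx.
have nodeC : forall i, (i < m.+1)%N -> forall l,
    exists a b, forall z, C z -> nv (evg 0 i z) l = dotv a z + b.
  move=> i Hi l; have [al [be H]] := NodeAff 0 i sgC.
  exists (al l), (be l) => z Hz; apply: H.
  by apply: (Cell_le 0 m.+1 i sgC z (ltnW Hi)); apply/HsgC.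
have HCeq : forall z, C z <-> Cell 0 m.+1 (sgw x) z.
  move=> z; split.
    move=> Cz i Hi l; have Hz := (proj1 (HsgC z)) Cz i Hi l.
    have Hx := (proj1 (HsgC x)) Cx i Hi l.
    rewrite addn0 in Hz Hx *; rewrite /sgw.
    case: (eqVneq (nv (evg 0 i x) l) 0) => Hx0.
      have [a [b Hab]] := nodeC i Hi l.
      left; apply: (relint_zero (n 0) C (fun z => nv (evg 0 i z) l) a b (sgC i l) x z Hab _ rx Cz Hx0).
      by move=> q Hq; have := (proj1 (HsgC q)) Hq i Hi l; rewrite addn0.
    by case: Hx => [/eqP|->]; [rewrite (negbTE Hx0) | exact: Hz].
  move=> Cz; apply/HsgC => i Hi l.
  have := Cz i Hi l; have Hx := (proj1 (HsgC x)) Cx i Hi l.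
  rewrite !addn0 in Hx *; rewrite /sgw => H.
  exact: cons_trans Hx H.
have [z [Hz _]] := Build Hst x y m.+1 (leqnn _).
set u := uu x y.
have Ez : Cell 0 m.+1 u z by move=> i Hi l; apply: sgz_cons; rewrite addn0; exact: Hz.
pose E := Cell 0 m.+1 u.
exists E; split; first exact: (canonF_Cell _ _ _ Ez).
have nodeE : forall i, (i < m.+1)%N -> forall l,
    exists a b, forall z, E z -> nv (evg 0 i z) l = dotv a z + b.
  move=> i Hi l; have [al [be H]] := NodeAff 0 i u.
  exists (al l), (be l) => z0 Hz0; apply: H.
  exact: (Cell_le 0 m.+1 i u z0 (ltnW Hi)).
have Esg : forall z', relint E z' -> forall i, (i < m.+1)%N -> forall l,
    sgz (nv (evg 0 i z') l) = u i l.
  move=> z' rz i Hi l; have := (proj1 rz) i Hi l; rewrite addn0; case=> [H0|//].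
  have [a [b Hab]] := nodeE i Hi l.
  have Hc : forall q, E q -> cons (u i l) (nv (evg 0 i q) l).
    by move=> q Hq; have := Hq i Hi l; rewrite addn0.
  have := relint_zero (n 0) E _ a b (u i l) z' z Hab Hc rz Ez H0.
  by rewrite H0 sgz0 /u -(Hz i l Hi) /sgw => ->; rewrite sgz0.
split; last first.
  move=> z' rz i j; have := Esg z' rz i (ltn_ord i) (val j).
  by rewrite /signseq /sprod /u /uu /sgw !nv_Fto.
pose phi := fun z => \sum_(i < m.+1) \sum_(j < n i.+1)
   (if sgw x i j == 0 then (u i j)%:~R * nv (evg 0 i z) j else 0).
have [a [b Hab]] : AffOn E phi.
  apply: aff_sum => i; apply: aff_sum => j.
  case: (sgw x i j == 0); last by exists (fun _ => 0), 0 => z0 _; rewrite dotv0 addr0.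
  apply: aff_scale; have [a [b H]] := nodeE i (ltn_ord i) j.
  by exists a, b.
have inner_ge0 : forall z0, E z0 -> forall i : 'I_m.+1, forall j : 'I_(n i.+1),
    0 <= (if sgw x i j == 0 then (u i j)%:~R * nv (evg 0 i z0) j else 0).
  move=> z0 Hz0 i j; case: ifP => _ //; apply: cons_mul_ge0.
  by have := Hz0 i (ltn_ord i) j; rewrite addn0.
have phi_ge0 : forall z0, E z0 -> 0 <= phi z0.
  move=> z0 Hz0; apply: sumr_ge0 => i _; apply: sumr_ge0 => j _; exact: inner_ge0.
exists (fun q => - a q), b; split.
  by move=> z0 Hz0; rewrite dotvN; have := phi_ge0 _ Hz0; rewrite Hab //; lra.
move=> z0; split.
  move=> /HCeq Cz0.
  have Ez0 : E z0.
    move=> i Hi l; have := Cz0 i Hi l; rewrite /u /uu; exact: cons_u.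
  split=> //.
  have : phi z0 = 0.
    apply: big1 => i _; apply: big1 => j _; case: ifP => // /eqP H0.
    have := Cz0 i (ltn_ord i) j; rewrite addn0 H0.
    case=> [->|/eqP]; first by rewrite mulr0.
    by rewrite sgz_eq0 => /eqP ->; rewrite mulr0.
  by rewrite Hab // dotvN => H; lra.
move=> [Ez0 Hb]; apply/HCeq => i Hi l.
have phi0 : phi z0 = 0 by rewrite Hab //; rewrite dotvN in Hb; lra.
rewrite addn0; case: (ltnP l (n i.+1)) => Hl; last first.
  by rewrite nv_out ?projT1_evg ?addn0 //; left.
pose ii : 'I_m.+1 := Ordinal Hi.
pose jj : 'I_(n ii.+1) := Ordinal Hl.
have Hin : forall i : 'I_m.+1, true -> 0 <= \sum_(j < n i.+1)
    (if sgw x i j == 0 then (u i j)%:~R * nv (evg 0 i z0) j else 0).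
  by move=> i0 _; apply: sumr_ge0 => j _; exact: inner_ge0.
have T1 := @psumr_eq0P _ _ _ _ Hin phi0 ii isT.
have T2 := @psumr_eq0P _ _ _ _ (fun j _ => inner_ge0 z0 Ez0 ii j) T1 jj isT.
have Hc := Ez0 i Hi l; rewrite addn0 in Hc.
move: T2; rewrite /=.
case: (eqVneq (sgw x i l) 0) => Hs.
  move=> /eqP; rewrite mulf_eq0 => /orP [|/eqP ->]; last by left.
  by rewrite intr_eq0 => /eqP Hu; rewrite Hs; rewrite Hu in Hc.
by move=> _; move: Hc; rewrite /u /uu Hs.
Qed.

End Net.

Theorem lemma18 (R : realType) (m : nat) (n : nat -> nat)
    (W : forall i : nat, 'I_(n i.+1) -> 'I_(n i) -> R)
    (bias : forall i : nat, 'I_(n i.+1) -> R) :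
  n m.+1 = 1%N ->
  supertransversal m W bias ->
  forall C D : vec R (n 0%N) -> Prop,
    canonF m W bias m.+1 C -> canonF m W bias m.+1 D ->
    forall x y : vec R (n 0%N), relint C x -> relint D y ->
    exists E : vec R (n 0%N) -> Prop,
      canonF m W bias m.+1 E /\ face_le C E /\
      forall z, relint E z ->
        forall (i : 'I_m.+1) (j : 'I_(n i.+1)),
          @signseq R m n W bias z i j =
          @sprod m n (@signseq R m n W bias x) (@signseq R m n W bias y) i j.
Proof.
move=> _ Hst C D HC HD x y rx ry.
exact: (main_in R m n W bias Hst C D HC HD x y rx ry).
Qed.
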